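(* Let the system $x^+=f(x,u)$ (as in the context) be flat with flat output $y$ and parameterization $x=F_x(y_{[-R_1,R_2-1]})$, $u=F_u(y_{[-R_1,R_2]})$. Then the submatrices $\partial_{y_{[R_2-1]}}F_x$ (the Jacobian of $F_x$ with respect to the variables $y^j_{[r_{2,j}-1]}$, $j=1,\dots,m$) and $\partial_{y_{[R_2]}}F_u$ (the Jacobian of $F_u$ with respect to the variables $y^j_{[r_{2,j}]}$, $j=1,\dots,m$) have the same (generic) rank.
   Context: Consider a nonlinear time-invariant discrete-time system $x^{i,+}=f^i(x,u)$, $i=1,\dots,n$, with $x\in\mathbb{R}^n$, $u\in\mathbb{R}^m$, smooth $f$, $\operatorname{rank}(\partial_u f)=m$, and $\operatorname{rank}(\partial_{(x,u)}f)=n$. Let $g(x,u)$ be $m$ smooth functions such that $(x,u)\mapsto(f(x,u),g(x,u))$ is a local diffeomorphism, and $\zeta=g(x,u)$. Notation: $w_{[\alpha]}$ is the $\alpha$-th forward shift, $w_{[-\alpha]}$ the $\alpha$-th backward shift; for a multi-index $R=(r_1,\dots,r_m)$ and $y=(y^1,\dots,y^m)$, $y_{[R]}$ denotes $(y^1_{[r_1]},\dots,y^m_{[r_m]})$ and $y_{[-S_1,S_2]}$ denotes all $y^j_{[i]}$ with $-s_{1,j}\le i\le s_{2,j}$. Flatness: the system is flat around an equilibrium if there exist an $m$-tuple $y=\varphi(\zeta_{[-Q_1,-1]},x,u,u_{[1,Q_2]})$ (flat output) and smooth maps $x=F_x(y_{[-R_1,R_2-1]})$, $u=F_u(y_{[-R_1,R_2]})$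 (the uniquely determined parameterization) establishing locally a one-to-one correspondence between system trajectories and arbitrary sequences $y(k)\in\mathbb{R}^m$; in particular the identity $\delta(F_x)=f(F_x,F_u)$ holds, where $\delta$ is the forward shift operator acting on functions of $y$ and its shifts (replacing each $y_{[i]}$ by $y_{[i+1]}$). *)

(* Defs.v *)
From HB Require Import structures.
From mathcomp Require Import all_boot all_order all_algebra.
From mathcomp Require Import all_classical all_reals all_analysis.
Set Implicit Arguments. Unset Strict Implicit. Unset Printing Implicit Defensive.
Import Order.TTheory GRing.Theory Num.Theory.
Import numFieldNormedType.Exports.
Local Open Scope ring_scope.

Section Defs.
Variable R : realType.

Fixpoint iter_dir (V W : normedModType R) (vs : seq V) (F : V -> W) : V -> W :=
  match vs with
  | [::] => F
  | v :: vs' => fun x => 'D_v (iter_dir vs' F) x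
  end.

Definition smooth (V W : normedModType R) (F : V -> W) : Prop :=
  forall vs : seq V,
    continuous (iter_dir vs F) /\ forall x v, derivable (iter_dir vs F) x v.

Definition germ_generic_rank (V : normedModType R) (p q : nat)
    (A : V -> 'M[R]_(p, q)) (x0 : V) (r : nat) : Prop :=
  (\forall x \near x0, (\rank (A x) <= r)%N) /\
  (forall U, nbhs x0 U -> exists2 x, U x & \rank (A x) = r).

Definition jac_u (n m : nat) (f : 'rV[R]_n -> 'rV[R]_m -> 'rV[R]_n)
    (x : 'rV[R]_n) (u : 'rV[R]_m) : 'M[R]_(n, m) :=
  \matrix_(i < n, j < m) ('D_(delta_mx 0 j) (f x) u) 0 i.
Definition jac_x (n m : nat) (f : 'rV[R]_n -> 'rV[R]_m -> 'rV[R]_n)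
    (x : 'rV[R]_n) (u : 'rV[R]_m) : 'M[R]_(n, n) :=
  \matrix_(i < n, j < n) ('D_(delta_mx 0 j) (fun x' => f x' u) x) 0 i.

End Defs.

(* Given multi-indices r1, r2 : 'I_m -> nat,
   a finite stretch of an m-dimensional sequence y is stored in a matrix
   Y : 'M_(m, (wlen r1 r2).+1), the entry Y j k standing for y^j_[k - woff r1],
   i.e. y^j_[i] is stored in column woff r1 + i.  Columns range over
   -woff r1 <= i <= max r2, which contains every y^j_[i], -r1_j-1 <= i <= r2_j. *)
Definition woff (m : nat) (r1 : 'I_m -> nat) : nat := (\max_(j < m) r1 j).+1.
Definition wlen (m : nat) (r1 r2 : 'I_m -> nat) : nat := woff r1 + \max_(j < m) r2 j.

(* forward shift delta: (shift Y) stores y_[i+1] where Y stores y_[i]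
   (the last column, never used below, is filled arbitrarily) *)
Definition yshift (R : realType) (m L : nat) (Y : 'M[R]_(m, L.+1)) : 'M[R]_(m, L.+1) :=
  \matrix_(j < m, k < L.+1) Y j (inord k.+1).

Definition depends_only_on (R : realType) (m L : nat) (T : Type)
    (F : 'M[R]_(m, L) -> T) (P : 'I_m -> 'I_L -> bool) : Prop :=
  forall Y Y' : 'M[R]_(m, L), (forall j k, P j k -> Y j k = Y' j k) -> F Y = F Y'.

Definition jac_cols (R : realType) (m L p : nat) (F : 'M[R]_(m, L) -> 'rV[R]_p)
    (c : 'I_m -> 'I_L) (Y : 'M[R]_(m, L)) : 'M[R]_(p, m) :=
  \matrix_(i < p, j < m) ('D_(delta_mx j (c j)) F Y) 0 i.

(* Main.v *)
Require Import Defs.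
From HB Require Import structures.
From mathcomp Require Import all_boot all_order all_algebra.
From mathcomp Require Import all_classical all_reals all_analysis.
Import Order.TTheory GRing.Theory Num.Theory.
Import numFieldNormedType.Exports.
Local Open Scope ring_scope.
Local Open Scope classical_set_scope.

Section Aux.
Variable R : realType.

Lemma mxnorm_entry m n (M : 'M[R]_(m,n)) i j : `|M i j| <= `|M|.
Proof.
rewrite (_ : `|M| = mx_norm M) // mx_normrE; exact: (le_bigmax _ (fun ij : 'I_m * 'I_n => `|M ij.1 ij.2|) (i, j)).
Qed.

Lemma mxnorm_le m n (M : 'M[R]_(m,n)) c : 0 <= c -> (forall i j, `|M i j| <= c) -> `|M| <= c.
Proof.
move=> c0 H; rewrite (_ : `|M| = mx_norm M) // mx_normrE; apply: bigmax_le => // -[i j] _; exact: H.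
Qed.

Lemma dir_line (V W : normedModType R) (g : V -> W) a e s :
  derivable g (s *: e + a) e ->
  derivable (fun t : R => g (t *: e + a)) s 1 /\
  'D_1 (fun t : R => g (t *: e + a)) s = 'D_e g (s *: e + a).
Proof.
have E : (fun h : R => h^-1 *: (((fun t : R => g (t *: e + a)) \o shift s) (h *: 1) - g (s *: e + a)))
  = (fun h : R => h^-1 *: ((g \o shift (s *: e + a)) (h *: e) - g (s *: e + a))).
  apply/funext => h /=; congr (_ *: (g _ - _)).
  by rewrite (_ : h *: (1:R) = h) ?scalerDl ?addrA //; exact: mulr1.
by rewrite /derivable /derive /= E.
Qed.

Lemma MVT0 (phi dphi : R -> R) (b : R) :
  (forall x : R, is_derive x (1:R) phi (dphi x)) ->
  exists2 c, `|c| <= `|b| & phi b - phi 0 = dphi c * b.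
Proof.
move=> D.
have C : forall x, {for x, continuous phi}.
  move=> x; apply: differentiable_continuous; apply/derivable1_diffP.
  by have [] := D x.
have Cw : forall a b : R, {within `[a, b], continuous phi}.
  by move=> a b'; apply: continuous_subspaceT => x; exact: C.
case: (leP 0 b) => hb.
  have [c cin E] := MVT_segment hb (fun x _ => D x) (Cw 0 b).
  exists c; last by rewrite E subr0.
  move: cin; rewrite in_itv /= => /andP[c0 cb].
  by rewrite !ger0_norm // (le_trans c0 cb).
have [c cin E] := MVT_segment (ltW hb) (fun x _ => D x) (Cw b 0).
exists c.
  move: cin; rewrite in_itv /= => /andP[bc c0].
  by rewrite !ler0_norm ?(ltW hb) // lerN2.
by apply/eqP; rewrite -opprB E sub0r mulrN opprK.
Qed.


Lemma C1_diff m (g : 'rV[R]_m -> R) (u : 'rV[R]_m) :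
  (forall k a, derivable g a (delta_mx 0 k)) ->
  (forall k, {for u, continuous ('D_(delta_mx 0 k) g)}) ->
  differentiable g u.
Proof.
move=> Dg Cg.
pose D k := 'D_(delta_mx 0 k) g u.
pose L := fun h : 'rV[R]_m => \sum_k h 0 k * D k.
have lind : linear L.
  move=> a x y; rewrite /L scaler_sumr -big_split /=; apply: eq_bigr => k _.
  by rewrite !mxE mulrDl -mulrA.
pose dL : {linear 'rV[R]_m -> R} := HB.pack L (GRing.isLinear.Build _ _ _ _ _ lind).
have Lb : forall h, `|L h| <= (\sum_k `|D k|) * `|h|.
  move=> h; rewrite mulr_suml; apply: (le_trans (ler_norm_sum _ _ _)).
  apply: ler_sum => k _; rewrite normrM mulrC ler_wpM2l //; exact: mxnorm_entry.
have Lc : continuous dL.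
  apply/bounded_linear_continuous/linear_boundedP.
  have Cr : (\sum_k `|D k|) \is Num.real by rewrite realE sumr_ge0 // => k _.
  apply: filterS (nbhs_pinfty_ge Cr) => r Cr' h.
  by apply: (le_trans (Lb h)); apply: ler_wpM2r.
have H := @diff_unique R _ _ g dL u Lc.
have Ho : ltac:(match type of H with ?A -> _ => exact A end).
  apply/(proj2 (eqaddoP _ _ _ _)) => eps eps0.
  pose e' := eps / m.+1%:R.
  have e'0 : 0 < e' by rewrite divr_gt0.
  have := @filter_forall _ 'I_m (fun k xi => `|D k - 'D_(delta_mx 0 k) g xi| <= e') (nbhs u) (nbhs_filter u)
     (fun k => cvgr_dist_le _ _ (Cg k) _ e'0).
  move=> Hn; have {Hn}Hn := Hn (nbhs_filter u); have [d /= d0 Hd] := proj1 (nbhs_normP _ _) Hn.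
  near=> h.
  have hd : `|h| < d by near: h; exact: (@nbhs0_lt _ 'rV[R]_m _ d0).
  pose p (n : nat) : 'rV[R]_m := \row_(l < m) (if (l < n)%N then h 0 l else 0).
  have pm : p m = h by apply/rowP => l; rewrite !mxE ltn_ord.
  have p0 : p 0%N = 0 by apply/rowP => l; rewrite !mxE.
  have T : g (h + u) - g u = \sum_(k < m) (g (p k.+1 + u) - g (p k + u)).
    by rewrite -(big_mkord xpredT (fun k => g (p k.+1 + u) - g (p k + u))) telescope_sumr // pm p0 add0r.
  have term : forall k : 'I_m, `|g (p k.+1 + u) - g (p k + u) - h 0 k * D k| <= `|h| * e'.
    move=> k; pose a := p k + u.
    have pk1 : p k.+1 + u = h 0 k *: delta_mx 0 k + a.
      rewrite /a addrA; congr (_ + _); apply/rowP => l; rewrite !mxE ltnS.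
      case: (eqVneq l k) => [->|nlk]; first by rewrite leqnn ltnn /= mulr1 addr0.
      by rewrite /= mulr0 add0r leq_eqVlt (negbTE (nlk : (l:nat) != k)).
    have Dl : forall x : R, is_derive x (1:R) (fun s : R => g (s *: delta_mx 0 k + a))
              ('D_(delta_mx 0 k) g (x *: delta_mx 0 k + a)).
      move=> x; have [d1 d2] := dir_line _ _ _ _ _ _ (Dg k (x *: delta_mx 0 k + a)).
      by apply: DeriveDef.
    have [c hc E] := MVT0 _ _ (h 0 k) Dl.
    move: E; rewrite scale0r add0r -pk1 => ->.
    rewrite mulrC -mulrBr normrM; apply: ler_pM => //.
      exact: mxnorm_entry.
    have B : ball_ Num.Def.normr u d (c *: delta_mx 0 k + a).
      rewrite /ball_ /a /= addrA opprD addrCA subrr addr0 normrN.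
      apply: le_lt_trans hd; apply: mxnorm_le => // i l.
      rewrite (ord1 i) !mxE; case: (eqVneq l k) => [->|nlk].
        by rewrite ltnn /= mulr1 addr0; apply: le_trans hc _; exact: mxnorm_entry.
      rewrite /= mulr0 add0r; case: ifP => _; first exact: mxnorm_entry.
      by rewrite normr0.
    rewrite distrC; exact: (Hd _ B k).
  have -> : (g \o +%R^~ u - (cst (g u) + L)) h = g (h + u) - (g u + L h) by [].
  rewrite opprD addrA T /L -sumrB.
  apply: (le_trans (ler_norm_sum _ _ _)); apply: (le_trans (ler_sum _ (fun k _ => term k))).
  rewrite sumr_const card_ord -mulr_natr -mulrA [eps * _]mulrC ler_wpM2l //.
  rewrite /e' mulrAC ler_pdivrMr ?ltr0Sn // ler_pM2l // ler_nat; exact: leqnSn.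
apply: (proj2 (diff_locallyP u g)); rewrite (H Ho); split => //.
Unshelve. all: by end_near.
Qed.

Lemma coordD (V : normedModType R) p q (F : V -> 'M[R]_(p,q)) a v i j :
  derivable F a v ->
  derivable (fun x => F x i j) a v /\ 'D_v (fun x => F x i j) a = ('D_v F a) i j.
Proof.
move=> dF.
have Hq : (fun h : R => h^-1 *: (((fun x => F x i j) \o shift a) (h *: v) - F a i j))
   = (fun M : 'M[R]_(p,q) => M i j) \o (fun h : R => h^-1 *: ((F \o shift a) (h *: v) - F a)).
  by apply/funext => h /=; rewrite !mxE.
have cv : (fun h : R => h^-1 *: (((fun x => F x i j) \o shift a) (h *: v) - F a i j)) @ 0^'
     --> ('D_v F a) i j.
  rewrite Hq; apply: continuous_cvg; first exact: coord_continuous.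
  exact: dF.
split; first by apply/cvg_ex; exists (('D_v F a) i j).
exact: cvg_lim cv.
Qed.

Lemma line0 (V W : normedModType R) (g : V -> W) a e :
  (derivable g a e <-> derivable (fun t : R => g (t *: e + a)) 0 1) /\
  'D_e g a = 'D_1 (fun t : R => g (t *: e + a)) 0.
Proof.
have E : (fun h : R => h^-1 *: (((fun t : R => g (t *: e + a)) \o shift 0) (h *: 1) - g (0 *: e + a)))
  = (fun h : R => h^-1 *: ((g \o shift a) (h *: e) - g a)).
  apply/funext => h /=; rewrite scale0r add0r addr0.
  by rewrite (_ : h *: (1:R) = h) //; exact: mulr1.
by rewrite /derivable /derive /= E.
Qed.

Lemma chainD (V : normedModType R) m (G : 'rV[R]_m -> R) (Phi : V -> 'rV[R]_m) a v :
  derivable Phi a v -> differentiable G (Phi a) ->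
  derivable (G \o Phi) a v /\ 'D_v (G \o Phi) a = 'd G (Phi a) ('D_v Phi a).
Proof.
move=> dP dG.
have [l1 l2] := line0 _ _ Phi a v.
have [m1 m2] := line0 _ _ (G \o Phi) a v.
pose gam := fun t : R => Phi (t *: v + a).
have g0 : gam 0 = Phi a by rewrite /gam scale0r add0r.
have dgam : differentiable gam 0 by apply/derivable1_diffP; exact: (proj1 l1 dP).
have dG' : differentiable G (gam 0) by rewrite g0.
have dc : differentiable (G \o gam) 0 := differentiable_comp dgam dG'.
split.
  apply/m1; exact/derivable1_diffP.
rewrite m2 (_ : (fun t : R => (G \o Phi) (t *: v + a)) = G \o gam) //.
by rewrite deriveE // diff_comp // /= g0 l2 -/gam (deriveE (1:R) dgam).
Qed.

Lemma pair2 (U V W : normedModType R) (P : U * V -> W) x w e :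
  (derivable P (x, w) (0, e) <-> derivable (fun w => P (x, w)) w e) /\
  'D_(0, e) P (x, w) = 'D_e (fun w => P (x, w)) w.
Proof.
have E : (fun h : R => h^-1 *: ((P \o shift (x, w)) (h *: (0, e)) - P (x, w)))
   = (fun h : R => h^-1 *: (((fun w => P (x, w)) \o shift w) (h *: e) - P (x, w))).
  apply/funext => h /=; congr (_ *: (P _ - _)).
  apply/pair_equal_spec; split => /=; last by [].
  by rewrite scaler0 add0r.
by rewrite /derivable /derive /= E.
Qed.

Lemma fx_partial n m (f : 'rV[R]_n -> 'rV[R]_m -> 'rV[R]_n) x :
  smooth (fun p : 'rV[R]_n * 'rV[R]_m => f p.1 p.2) ->
  (forall w e, derivable (f x) w e) /\ (forall e, continuous ('D_e (f x))).
Proof.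
move=> sP; split.
  move=> w e; have [[A _] _] := pair2 _ _ _ (fun p : 'rV[R]_n * 'rV[R]_m => f p.1 p.2) x w e.
  apply: A; exact: ((sP [::]).2 (x, w) (0, e)).
move=> e.
have -> : 'D_e (f x) = (fun p => 'D_(0, e) (fun p : 'rV[R]_n * 'rV[R]_m => f p.1 p.2) p) \o (fun w => (x, w)).
  apply/funext => w /=; by rewrite (pair2 _ _ _ (fun p : 'rV[R]_n * 'rV[R]_m => f p.1 p.2) x w e).2.
move=> w; have C := (sP [:: (0, e)]).1 (x, w); rewrite /= in C.
have Hp : {for w, continuous (fun w' : 'rV[R]_m => (x, w'))}.
  apply: differentiable_continuous; apply: differentiable_pair => //.
exact: (continuous_comp Hp C).
Qed.

Lemma lin_comp (U W : normedModType R) (S : U -> U) (F : U -> W) a v :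
  (forall (h : R) A B, S (h *: A + B) = h *: S A + S B) ->
  (derivable F (S a) (S v) <-> derivable (F \o S) a v) /\
  'D_v (F \o S) a = 'D_(S v) F (S a).
Proof.
move=> HS.
have E : (fun h : R => h^-1 *: (((F \o S) \o shift a) (h *: v) - (F \o S) a))
   = (fun h : R => h^-1 *: ((F \o shift (S a)) (h *: S v) - F (S a))).
  by apply/funext => h /=; rewrite HS.
by rewrite /derivable /derive /= E.
Qed.

Lemma line_eq (U W : normedModType R) (F G : U -> W) a v :
  (forall h : R, F (h *: v + a) = G (h *: v + a)) ->
  (derivable F a v <-> derivable G a v) /\ 'D_v F a = 'D_v G a.
Proof.
move=> HFG.
have Ea : F a = G a by have := HFG 0; rewrite scale0r add0r.
have E : (fun h : R => h^-1 *: ((F \o shift a) (h *: v) - F a))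
   = (fun h : R => h^-1 *: ((G \o shift a) (h *: v) - G a)).
  by apply/funext => h /=; rewrite HFG Ea.
by rewrite /derivable /derive /= E.
Qed.

Lemma germ_near (V : normedModType R) p q p' q' (A : V -> 'M[R]_(p, q)) (B : V -> 'M[R]_(p', q')) Y0 r :
  (\forall Y \near Y0, \rank (A Y) = \rank (B Y)) ->
  germ_generic_rank A Y0 r -> germ_generic_rank B Y0 r.
Proof.
move=> Heq [H1 H2]; split.
  by apply: filterS2 Heq H1 => Y ->.
move=> U hU.
have [x [Ux Ex] Ax] := H2 (U `&` [set Y | \rank (A Y) = \rank (B Y)]) (filterI hU Heq).
by exists x => //; rewrite -Ex.
Qed.

Lemma germ_comp (V : normedModType R) p q (A : V -> 'M[R]_(p, q)) (s t : V -> V) Y0 r :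
  (forall Z, s (t Z) = Z) -> {for Y0, continuous s} -> {for Y0, continuous t} ->
  s Y0 = Y0 -> t Y0 = Y0 ->
  (germ_generic_rank A Y0 r <-> germ_generic_rank (A \o s) Y0 r).
Proof.
move=> st cs ct sY tY; split => -[H1 H2]; split.
- have := cs [set Z | (\rank (A Z) <= r)%N]; rewrite sY; apply; exact: H1.
- move=> U hU.
  have hU' : nbhs Y0 [set Z | U (t Z)] by have := ct U; rewrite tY; apply.
  have [Z UZ AZ] := H2 _ hU'.
  by exists (t Z) => //=; rewrite st.
- have := ct [set Z | (\rank (A (s Z)) <= r)%N]; rewrite tY => /(_ H1) H.
  have H' : \forall Z \near Y0, (\rank (A (s (t Z))) <= r)%N := H.
  by apply: (filterS _ H') => Z /=; rewrite st.

- move=> U hU.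
  have hU' : nbhs Y0 [set Z | U (s Z)] by have := cs U; rewrite sY; apply.
  have [Z UZ AZ] := H2 _ hU'.
  by exists (s Z).
Qed.

Lemma rank_mul_free n m (J : 'M[R]_(n, m)) (B : 'M[R]_m) :
  \rank J = m -> \rank (J *m B) = \rank B.
Proof.
move=> HJ; rewrite -mxrank_tr trmx_mul mxrankMfree ?mxrank_tr //.
by rewrite /row_free mxrank_tr HJ.
Qed.

End Aux.

From mathcomp Require Import zify.

Section Shift.
Variables (R : realType) (m L : nat).

Definition yunshift (Z : 'M[R]_(m, L.+1)) : 'M[R]_(m, L.+1) :=
  \matrix_(j, k) Z j (if (k == 0 :> nat) then ord_max else inord k.-1).

Lemma inord_succ (k : 'I_L.+1) :
  val (inord k.+1 : 'I_L.+1) = if (k < L)%N then k.+1 else 0%N.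
Proof.
case: ltnP => h; first exact: inordK.
by rewrite /inord /insubd insubF //= ltnS ltnNge h.
Qed.

Lemma ys_unshift Z : yshift (yunshift Z) = Z.
Proof.
apply/matrixP => j k; rewrite !mxE inord_succ; case: ltnP => hk /=.
  by congr (Z j _); apply/val_inj; rewrite /= inordK // ltnS ltnW.
congr (Z j _); apply/val_inj => /=; have := ltn_ord k; lia.
Qed.

Lemma ys_lin (h : R) A B : yshift (h *: A + B) = h *: yshift A + yshift B :> 'M[R]_(m, L.+1).
Proof. by apply/matrixP => j k; rewrite !mxE. Qed.

Lemma ys_cont : continuous (@yshift R m L).
Proof.
move=> x; apply/(@cvgrPdist_lt _ _ _ (nbhs x) (nbhs_filter x)) => e e0; near=> y.
have H : `|yshift x - yshift y| <= `|x - y|.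
  apply: mxnorm_le => // j k; have := mxnorm_entry _ _ _ (x - y) j (inord k.+1); rewrite !mxE //.

apply: le_lt_trans H _; near: y; apply: filterS (nbhsx_ballx x e e0) => y; by rewrite -ball_normE.
Unshelve. all: by end_near.
Qed.

Lemma yus_cont : continuous yunshift.
Proof.
move=> x; apply/(@cvgrPdist_lt _ _ _ (nbhs x) (nbhs_filter x)) => e e0; near=> y.
have H : `|yunshift x - yunshift y| <= `|x - y|.
  apply: mxnorm_le => // j k.
  have := mxnorm_entry _ _ _ (x - y) j (if (k == 0 :> nat) then ord_max else inord k.-1).
  by rewrite !mxE.
apply: le_lt_trans H _; near: y; apply: filterS (nbhsx_ballx x e e0) => y; by rewrite -ball_normE.
Unshelve. all: by end_near.
Qed.

End Shift.

Lemma arith_succ (k L c : nat) : (0 < c)%N -> (c <= L)%N -> (k < L.+1)%N ->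
  ((if (k < L)%N then k.+1 else 0%N) == c) = (k == c.-1).
Proof.
move=> h1 h2 h3; case: (ltnP k L) => hk; apply/eqP/eqP; lia.
Qed.

Theorem proposition1 (R : realType) (n m : nat)
  (f : 'rV[R]_n -> 'rV[R]_m -> 'rV[R]_n)
  (r1 r2 : 'I_m -> nat)
  (Fx : 'M[R]_(m, (wlen r1 r2).+1) -> 'rV[R]_n)
  (Fu : 'M[R]_(m, (wlen r1 r2).+1) -> 'rV[R]_m)
  (x0 : 'rV[R]_n) (u0 : 'rV[R]_m) (y0 : 'rV[R]_m) :
  smooth (fun p : 'rV[R]_n * 'rV[R]_m => f p.1 p.2) ->
  (forall x u, \rank (jac_u f x u) = m) ->
  (forall x u, \rank (row_mx (jac_x f x u) (jac_u f x u)) = n) ->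
  f x0 u0 = x0 ->
  let Yeq : 'M[R]_(m, (wlen r1 r2).+1) := \matrix_(j, k) y0 0 j in
  Fx Yeq = x0 -> Fu Yeq = u0 ->
  smooth Fx -> smooth Fu ->
  depends_only_on Fx
    (fun j k => (woff r1 - r1 j <= k)%N && (k < woff r1 + r2 j)%N) ->
  depends_only_on Fu
    (fun j k => (woff r1 - r1 j <= k <= woff r1 + r2 j)%N) ->
  (\forall Y \near Yeq, Fx (yshift Y) = f (Fx Y) (Fu Y)) ->
  forall r : nat,
    germ_generic_rank (jac_cols Fx (fun j => inord (woff r1 + r2 j).-1)) Yeq r <->
    germ_generic_rank (jac_cols Fu (fun j => inord (woff r1 + r2 j))) Yeq r.
Proof.
move=> sP rJu _ _ Yeq _ _ sFx sFu dFx dFu Hid r.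
set L := wlen r1 r2.
set cx := (fun j : 'I_m => inord (woff r1 + r2 j).-1 : 'I_L.+1).
set cu := (fun j : 'I_m => inord (woff r1 + r2 j) : 'I_L.+1).
have Hc0 j : (0 < woff r1 + r2 j)%N by rewrite /woff addSn.
have HcL j : (woff r1 + r2 j <= L)%N.
  by rewrite /L /wlen leq_add2l (bigD1 j) //= leq_maxl.
have vcu j : (cu j : nat) = (woff r1 + r2 j)%N by rewrite /cu inordK // ltnS.
have vcx j : (cx j : nat) = (woff r1 + r2 j).-1 by rewrite /cx inordK // ltnS; have := HcL j; lia.
have F2 j : yshift (delta_mx j (cu j)) = delta_mx j (cx j) :> 'M[R]_(m, L.+1).
  apply/matrixP => j' k; rewrite !mxE; congr ((_ && _)%:R).
  rewrite -[inord _ == _]val_eqE -[k == _]val_eqE /= inord_succ vcu vcx.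
  by apply: arith_succ; [exact: Hc0 | exact: HcL | exact: ltn_ord].

have F3 j (h : R) Y : Fx (h *: delta_mx j (cu j) + Y) = Fx Y.
  apply: dFx => j' k /andP[_ hk]; rewrite !mxE.
  rewrite (_ : (j' == j) && (k == cu j) = false) ?mulr0 ?add0r //.
  apply/negbTE/andP => -[/eqP ej /eqP ek]; move: hk; rewrite ej ek vcu ltnn.
  by [].
have key Y : (\forall Z \near Y, Fx (yshift Z) = f (Fx Z) (Fu Z)) ->
    jac_cols Fx cx (yshift Y) = jac_u f (Fx Y) (Fu Y) *m jac_cols Fu cu Y.
  move=> HY.
  have [fD fC] := fx_partial R n m f (Fx Y) sP.
  apply/matrixP => i j; rewrite !mxE.
  pose E : 'M[R]_(m, L.+1) := delta_mx j (cu j).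
  have dFxs : derivable Fx (yshift Y) (yshift E) := (sFx [::]).2 _ _.
  have [lc1 lc2] := lin_comp R _ _ (@yshift R m L) Fx Y E (@ys_lin R m L).
  rewrite -(F2 j) -/E -lc2.
  have dcomp : derivable (Fx \o @yshift R m L) Y E := lc1.1 dFxs.
  rewrite -(@coordD R _ _ _ _ _ _ 0 i dcomp).2.
  rewrite (@near_eq_derive R _ _ _ (fun Z => f (Fx Z) (Fu Z) 0 i) Y E); last first.
    by apply: filterS HY => Z /= ->.
  pose G := fun w : 'rV[R]_m => f (Fx Y) w 0 i.
  rewrite (@line_eq R _ _ _ (G \o Fu) Y E _).2; last first.
    by move=> h; rewrite /G /= F3.
  have Gd : forall k a, derivable G a (delta_mx 0 k).
    by move=> k a; exact: (@coordD R _ _ _ _ _ _ 0 i (fD a _)).1.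
  have GD : forall k w, 'D_(delta_mx 0 k) G w = ('D_(delta_mx 0 k) (f (Fx Y)) w) 0 i.
    by move=> k w; exact: (@coordD R _ _ _ _ _ _ 0 i (fD w _)).2.
  have GC : forall k, {for Fu Y, continuous ('D_(delta_mx 0 k) G)}.
    move=> k.
    have -> : 'D_(delta_mx 0 k) G = (fun M : 'rV[R]_n => M 0 i) \o 'D_(delta_mx 0 k) (f (Fx Y)).
      by apply/funext => w /=; rewrite GD.
    apply: continuous_comp; [exact: fC | exact: coord_continuous].
  have dG := C1_diff R m G (Fu Y) Gd GC.
  rewrite (chainD R _ m G Fu Y E ((sFu [::]).2 Y E) dG).2.
  rewrite {1}(row_sum_delta ('D_E Fu Y)) linear_sum; apply: eq_bigr => k _.
  by rewrite linearZ /= -deriveE // GD !mxE mulrC.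
have Hrk : \forall Y \near Yeq,
    \rank ((jac_cols Fx cx \o @yshift R m L) Y) = \rank (jac_cols Fu cu Y).
  have := nbhs_interior Hid; apply: filterS => Y HY /=.
  by rewrite key // rank_mul_free.
have sY : yshift Yeq = Yeq by apply/matrixP => j k; rewrite !mxE.
have uY : @yunshift R m L Yeq = Yeq by apply/matrixP => j k; rewrite !mxE.
rewrite (@germ_comp R _ _ _ (jac_cols Fx cx) (@yshift R m L) (@yunshift R m L) Yeq r
  (ys_unshift _ _ _) (ys_cont _ _ _ Yeq) (yus_cont _ _ _ Yeq) sY uY).
split.
  exact: (@germ_near R _ _ _ _ _ _ _ Yeq r Hrk).
apply: (@germ_near R _ _ _ _ _ _ _ Yeq r).
by apply: filterS Hrk => Y ->.
Qed.
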